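(* Let $k\ge1$ and let $f$ be a sufficiently differentiable (at least $(3k-2)$-times differentiable) function of one variable. Then $$\Delta\Bigl(\tfrac{\partial}{\partial x_1},\dots,\tfrac{\partial}{\partial x_{2k}}\Bigr)\Delta\Bigl(\tfrac{\partial}{\partial x_1},\dots,\tfrac{\partial}{\partial x_{k}}\Bigr)\Delta\Bigl(\tfrac{\partial}{\partial x_{k+1}},\dots,\tfrac{\partial}{\partial x_{2k}}\Bigr)\prod_{i=1}^{2k}f(x_i),$$ evaluated at $x_1=\cdots=x_k=1$, $x_{k+1}=\cdots=x_{2k}=-1$, equals $k!^2\det(m_{ij})_{1\le i,j\le 2k}$, where for $1\le i\le k$ and $1\le j\le 2k$, $$m_{ij}=f^{(i+j-2)}(1),\qquad m_{k+i,j}=f^{(i+j-2)}(-1).$$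
   Context: $\Delta(z_1,\dots,z_n)=\prod_{1\le i<j\le n}(z_j-z_i)$ is the Vandermonde polynomial, and $\Delta(\partial/\partial x_{i_1},\dots,\partial/\partial x_{i_n})$ denotes the constant-coefficient differential operator obtained by substituting $z_m=\partial/\partial x_{i_m}$. *)

(* Defs.v *)
From HB Require Import structures.
From mathcomp Require Import all_boot all_order all_algebra.
From mathcomp Require Import mpoly.
From mathcomp Require Import reals topology normedtype derive.
Import numFieldNormedType.Exports.
Set Implicit Arguments. Unset Strict Implicit. Unset Printing Implicit Defensive.
Import Order.TTheory GRing.Theory Num.Theory.
Local Open Scope ring_scope.

Definition vdm (R : comNzRingType) (n m : nat) (idx : 'I_m -> 'I_n) : {mpoly R[n]} :=
  \prod_(a : 'I_m) \prod_(b : 'I_m | (a < b)%N) ('X_(idx b) - 'X_(idx a)).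

(* Action of the constant-coefficient differential operator
   P(d/dx_0, ..., d/dx_{n-1}) on the function (x_0,...,x_{n-1}) |-> prod_i f(x_i),
   evaluated at the point x.  Writing P = sum_m c_m z^m, the monomial operator
   d^m = prod_i (d/dx_i)^(m_i) sends prod_i f(x_i) to prod_i f^(m_i)(x_i). *)
Definition diffop_prod (R : realType) (n : nat) (P : {mpoly R[n]})
    (f : R -> R) (x : 'I_n -> R) : R :=
  \sum_(m <- msupp P) P@_m * \prod_(i < n) (derive1n (m i) f) (x i).

Definition ntimes_derivable (R : realType) (N : nat) (f : R -> R) : Prop :=
  forall j : nat, (j < N)%N -> forall x : R, derivable (derive1n j f) x 1.

(* Main.v *)
Require Import Defs.
From HB Require Import structures.
From mathcomp Require Import all_boot all_order all_algebra.
From mathcomp Require Import fingroup perm bigenough mpoly ssrcomplements.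
From mathcomp Require Import reals topology normedtype derive.
Import numFieldNormedType.Exports.
Import Order.TTheory GRing.Theory Num.Theory.
Local Open Scope ring_scope.
Set Implicit Arguments. Unset Strict Implicit. Unset Printing Implicit Defensive.
Import BigEnough.

Section Gfun.
Variables (R : comNzRingType) (n : nat) (g : 'X_{1..n} -> R).
Definition Gf (p : {mpoly R[n]}) := \sum_(m <- msupp p) p@_m * g m.

Lemma GfE p i : (msize p <= i)%N ->
  Gf p = \sum_(m : 'X_{1..n < i}) p@_m * g m.
Proof.
move=> le_pi; set I : subFinType _ := 'X_{1..n < i}.
rewrite /Gf (big_mksub I) ?msupp_uniq //=; first last.
  by move=> x /msize_mdeg_lt /leq_trans; apply.
rewrite big_rmcond //= => j /memN_msupp_eq0 ->.
by rewrite mul0r.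
Qed.

Lemma Gf_add : additive Gf.
Proof.
move=> p q /=; pose_big_enough i.
  rewrite !(GfE (i:=i)) // -sumrB; apply/eq_bigr.
  by case=> /= [m _] _; rewrite mcoeffB mulrBl.
by close.
Qed.

HB.instance Definition _ := GRing.isAdditive.Build {mpoly R[n]} R Gf Gf_add.

Lemma GfX m : Gf 'X_[m] = g m.
Proof. by rewrite /Gf msuppX big_seq1 mcoeffX eqxx mul1r. Qed.

Lemma Gf_sign (b : nat) p : Gf ((-1) ^+ b * p) = (-1) ^+ b * Gf p.
Proof.
elim: b => [|b IH]; first by rewrite !expr0 !mul1r.
rewrite !exprS !mulN1r !mulNr raddfN /= IH.
by [].
Qed.

Lemma Gf_mono (e : 'I_n -> nat) :
  Gf (\prod_(i < n) 'X_i ^+ e i) = g [multinom e i | i < n].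
Proof.
rewrite -GfX mpolyXE_id; congr Gf; apply: eq_bigr => i _; by rewrite mnmE.
Qed.
End Gfun.

Lemma vdm_E (R : comNzRingType) n m (idx : 'I_m -> 'I_n) :
  vdm R idx = \sum_(s : 'S_m) (-1) ^+ s * \prod_(j < m) ('X_(idx j) : {mpoly R[n]}) ^+ s j.
Proof.
rewrite /vdm.
have := det_Vandermonde (\row_j ('X_(idx j) : {mpoly R[n]})).
under eq_bigr do under eq_bigr do rewrite !mxE.
move=> <-; rewrite -det_tr /determinant; apply: eq_bigr => s _.
by congr (_ * _); apply: eq_bigr => j _; rewrite !mxE.
Qed.

Section Main.
Variables (R : realType) (k : nat) (f : R -> R).
Let n := (k + k)%N.
Let x := (fun i : 'I_(k + k) => if (i < k)%N then (1:R) else -1).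
Let g := (fun m : 'X_{1..k + k} => \prod_(i < k + k) derive1n (m i) f (x i)).
Let M := (\matrix_(i < k + k, j < k + k)
            match split i with
            | inl i' => derive1n (i' + j) f 1
            | inr i' => derive1n (i' + j) f (-1)
            end).
Let Mu := \matrix_(i < k, j < k + k) derive1n (i + j) f 1.
Let Md := \matrix_(i < k, j < k + k) derive1n (i + j) f (-1).
Definition eb (t r : 'S_k) (i : 'I_(k + k)) : nat :=
  match split i with inl j => t j | inr j => r j end.

Lemma hl (j : 'I_k) : split (lshift k j) = inl j.
Proof. exact: (unsplitK (inl _)). Qed.
Lemma hr (j : 'I_k) : split (rshift k j) = inr j.
Proof. exact: (unsplitK (inr _)). Qed.

Lemma LA (e : 'I_(k + k) -> nat) :
  Gf g (vdm R (@id 'I_(k + k)) * \prod_i 'X_i ^+ e i)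
  = \det (\matrix_(r < k + k, c < k + k) derive1n (e r + c) f (x r)).
Proof.
rewrite vdm_E mulr_suml raddf_sum; apply: eq_bigr => s _.
rewrite -mulrA.

rewrite /= Gf_sign; congr (_ * _).
rewrite -big_split /=.
under eq_bigr do rewrite -exprD.
rewrite Gf_mono /g; apply: eq_bigr => i _; by rewrite mnmE mxE addnC.
Qed.

Lemma blockE :
  vdm R (@lshift k k) * vdm R (@rshift k k) =
  \sum_(t : 'S_k) \sum_(r : 'S_k)
     (-1) ^+ t * ((-1) ^+ r * \prod_(i < k + k) 'X_i ^+ eb t r i).
Proof.
rewrite !vdm_E mulr_suml; apply: eq_bigr => t _; rewrite mulr_sumr.
apply: eq_bigr => r _; rewrite big_split_ord /= /eb.
under [X in _ = _ * (_ * (X * _))]eq_bigr do rewrite hl.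
under [X in _ = _ * (_ * (_ * X))]eq_bigr do rewrite hr.
by rewrite -!mulrA; congr (_ * _); rewrite mulrCA.
Qed.

Lemma detN (t r : 'S_k) :
  \det (\matrix_(i < k + k, c < k + k) derive1n (eb t r i + c) f (x i))
  = (-1) ^+ t * (-1) ^+ r * \det M.
Proof.
have -> : \matrix_(i < k + k, c < k + k) derive1n (eb t r i + c) f (x i)
   = block_mx (perm_mx t) 0 0 (perm_mx r) *m col_mx Mu Md.
  rewrite mul_block_col !mul0mx addr0 add0r -!row_permE.
  apply/matrixP => i c; rewrite -(splitK i); case: (split i) => j /=.
    by rewrite col_mxEu !mxE /eb hl /x /= ltn_ord.
  by rewrite col_mxEd !mxE /eb hr /x /= ltnNge leq_addr.
rewrite det_mulmx det_ublock !det_perm; congr (_ * _).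
by congr (\det _); apply/matrixP => i c; rewrite !mxE; case: (split i) => j; rewrite mxE.
Qed.


Lemma sgn_simp (a b : nat) (d : R) :
  (-1) ^+ a * ((-1) ^+ b * ((-1) ^+ a * (-1) ^+ b * d)) = d.
Proof. by rewrite -mulrA (mulrCA ((-1) ^+ b)) !signrMK. Qed.

Lemma main_eq :
  diffop_prod
    (vdm R (@id 'I_(k + k)) * vdm R (@lshift k k) * vdm R (@rshift k k))
    f x = ((k`! ^ 2)%:R : R) * \det M.
Proof.
change (Gf g (vdm R (@id 'I_(k + k)) * vdm R (@lshift k k) * vdm R (@rshift k k)) = ((k`! ^ 2)%:R : R) * \det M).
rewrite -mulrA blockE mulr_sumr raddf_sum /=.
under eq_bigr => t _ do rewrite mulr_sumr raddf_sum /=.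
under eq_bigr => t _ do under eq_bigr => r _ do
  rewrite mulrCA Gf_sign mulrCA Gf_sign LA detN sgn_simp.
rewrite sumr_const card_Sn sumr_const card_Sn -mulrnA mulr_natl.
by rewrite mulnn.
Qed.
End Main.

Theorem lemma3 (R : realType) (k : nat) (f : R -> R) :
  (1 <= k)%N ->
  ntimes_derivable (3 * k - 2) f ->
  diffop_prod
    (vdm R (@id 'I_(k + k)) * vdm R (@lshift k k) * vdm R (@rshift k k))
    f (fun i : 'I_(k + k) => if (i < k)%N then 1 else -1)
  = ((k`! ^ 2)%:R : R) *
    \det (\matrix_(i < k + k, j < k + k)
            match split i with
            | inl i' => derive1n (i' + j) f 1
            | inr i' => derive1n (i' + j) f (-1)
            end).
Proof. by move=> _ _; exact: main_eq. Qed.
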